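(* Let $p\geq 1$ be an integer, $H$ a connected graph with at least $2p$ vertices, and $T$ a complete rooted ternary tree with at least $p$ vertices. Let $V\subseteq V(T(H))$ with $OC(T,V)=V(T)$ and let $SV$ be an ordering of $V$. Then $T(H)$ has a witnessing matching $M$ for $SV$ of size at least $p\,(tr(|V(T)|)-tr(p))$. Moreover, $M$ is supported by a partition of $SV$ into a prefix $SV_1$ and a suffix $SV_2$ such that $|V(T(H))|-|SV_i|\geq p^2$ for each $i\in\{1,2\}$.
   Context: Complete rooted ternary tree of height $h$: rooted tree, every root-leaf path has exactly $h$ edges, every non-leaf vertex has exactly 3 children. For real $x\geq1$, $tr(x)$ is the largest integer $h\geq0$ such that a complete rooted ternary tree of height $h$ has at most $x$ vertices. Graph $T(H)$: for $V(H)=\{1,\dots,m\}$, vertices $v^i$ ($v\in V(T)$, $1\le i\le m$); for each $v$, $v^1,\dots,v^m$ span a copy $H^v$ of $H$; and $u^iv^i$ is an edge for each $i$ whenever $uv\in E(T)$. $OC(T,V)=\{u\in V(T): V(H^u)\cap V\neq\emptyset\}$. For a graph $G$, $V\subseteq V(G)$ and an ordering $SV$ of $V$: a partition of $SV$ into a prefix $SV_1$ and a suffix $SV_2$ supports an edge $\{u,v\}$ if one endpoint is in $SV_1$ and the other in $SV_2$, or one endpoint is in $V$ and the other in $V(G)\setminus V$; a matching is supported by the partition if all its edges are, and it is witnessing for $SV$ if it is supported by some such prefix/suffix partition. *)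

(* Defs.v *)
From mathcomp Require Import all_boot.
Set Implicit Arguments. Unset Strict Implicit. Unset Printing Implicit Defensive.

Definition simple_graph (V : finType) (e : rel V) : Prop :=
  (forall u v, e u v = e v u) /\ (forall v, ~~ e v v).

Definition connected_graph (V : finType) (e : rel V) : Prop :=
  simple_graph e /\ (forall u v, connect e u v).

(* Rooted tree given by root r and parent map par (par r = r); the edges are
   exactly the pairs {v, par v} for v <> r, and every vertex reaches r. *)
Definition is_rooted_tree (V : finType) (e : rel V) (r : V) (par : V -> V) : Prop :=
  par r = r /\ (forall v, exists k, iter k par v = r) /\
  (forall u v, e u v = ((u != r) && (par u == v)) || ((v != r) && (par v == u))).

Definition children (V : finType) (r : V) (par : V -> V) (v : V) : {set V} :=
  [set u | (u != r) && (par u == v)].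

Definition is_leaf (V : finType) (r : V) (par : V -> V) (v : V) : bool :=
  children r par v == set0.

Definition depth_is (V : finType) (r : V) (par : V -> V) (v : V) (k : nat) : Prop :=
  iter k par v = r /\ (forall j, j < k -> iter j par v != r).

Definition complete_ternary_tree (V : finType) (e : rel V) (h : nat) : Prop :=
  exists (r : V) (par : V -> V),
    is_rooted_tree e r par /\
    (forall v, is_leaf r par v -> depth_is r par v h) /\
    (forall v, ~~ is_leaf r par v -> #|children r par v| = 3).

(* number of vertices of a complete rooted ternary tree of height h *)
Definition ctt_size (h : nat) : nat := (3 ^ h.+1).-1 %/ 2.

(* tr(x): largest h >= 0 with ctt_size h <= x  (for x >= 1; ctt_size h > x when h >= x) *)
Definition tr (x : nat) : nat := \max_(h < x.+1 | ctt_size h <= x) h.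

(* The graph T(H), vertex (v,i) stands for v^i *)
Definition prodTH (T : finType) (eT : rel T) (m : nat) (eH : rel 'I_m) :
  rel (T * 'I_m) :=
  fun x y => ((x.1 == y.1) && eH x.2 y.2) || ((x.2 == y.2) && eT x.1 y.1).

Definition OC (T : finType) (m : nat) (V : {set T * 'I_m}) : {set T} :=
  [set u | [exists i : 'I_m, (u, i) \in V]].

Definition ordering_of (X : finType) (V : {set X}) (SV : seq X) : Prop :=
  uniq SV /\ (forall x, (x \in SV) = (x \in V)).

Definition is_matching (X : finType) (e : rel X) (M : {set {set X}}) : Prop :=
  (forall A, A \in M -> exists u v, [/\ u != v, e u v & A = [set u; v]]) /\
  (forall A B, A \in M -> B \in M -> A != B -> [disjoint A & B]).

Definition supports_edge (X : finType) (V : {set X}) (SV : seq X) (k : nat)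
  (u v : X) : bool :=
  [|| (u \in take k SV) && (v \in drop k SV),
      (v \in take k SV) && (u \in drop k SV),
      (u \in V) && (v \notin V) | (v \in V) && (u \notin V)].

Definition supports_matching (X : finType) (V : {set X}) (SV : seq X) (k : nat)
  (M : {set {set X}}) : Prop :=
  forall u v, [set u; v] \in M -> u != v -> supports_edge V SV k u v.

(* Main.v *)
Require Import Defs.
From mathcomp Require Import all_boot.
From mathcomp Require Import zify.
Set Implicit Arguments. Unset Strict Implicit. Unset Printing Implicit Defensive.

Lemma subS_le x y : x.+1 - y <= (x - y).+1. Proof. lia. Qed.
Lemma subn_leq1 x y : x <= y -> x.+1 - y <= 1. Proof. lia. Qed.

Lemma ctt_S d : ctt_size d.+1 = 3 * ctt_size d + 1.
Proof.
rewrite /ctt_size expnS.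
have := odd_double_half (3 ^ d.+1).
rewrite oddX orbT /= => <-.
set q := (3 ^ d.+1)./2.
rewrite -!muln2 /=. lia.
Qed.

Lemma ctt_eq d : 2 * ctt_size d + 1 = 3 ^ d.+1.
Proof. elim: d => [//|d IH]; rewrite ctt_S expnS -IH; lia. Qed.

Lemma ctt_gt d : d < ctt_size d.
Proof. elim: d => [//|d IH]; rewrite ctt_S; lia. Qed.

Lemma tr_ge x d : ctt_size d <= x -> d <= tr x.
Proof.
move=> H; have Hd : d < x.+1 by have := ctt_gt d; lia.
rewrite /tr. exact: (@leq_bigmax_cond _ (fun i : 'I_x.+1 => ctt_size i <= x) (fun i => nat_of_ord i) (Ordinal Hd)).
Qed.

Lemma tr_ctt h : tr (ctt_size h) <= h.
Proof.
rewrite /tr; apply/bigmax_leqP => i Hi.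
have := ctt_eq i; have := ctt_eq h => e1 e2.
have : 3 ^ i.+1 <= 3 ^ h.+1 by lia.
by rewrite leq_exp2l.
Qed.
Section Tree.
Variables (T : finType) (r : T) (par : T -> T).
Hypothesis par_r : par r = r.
Hypothesis reach : forall v, exists k, iter k par v = r.

Definition sub v := [set u | fconnect par u v].

Lemma iter_r n : iter n par r = r. Proof. exact: iter_fix. Qed.

Lemma fconP u v : reflect (exists n, iter n par u = v) (fconnect par u v).
Proof.
apply: (iffP idP) => [/iter_findex H|[n <-]]; last exact: fconnect_iter.
by eexists; exact: H.
Qed.

Lemma sub_self v : v \in sub v.
Proof. by rewrite inE connect0. Qed.

Lemma sub_root u : u \in sub r.
Proof. by have [k Hk] := reach u; rewrite inE; apply/fconP; exists k. Qed.

Lemma sub_ne_r v u : u \in sub v -> u != v -> u != r.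
Proof.
rewrite inE => /fconP [n <-]; apply: contra => /eqP ->.
by rewrite iter_r.
Qed.

Lemma sub_par v u : u \in sub v -> u != v -> par u \in sub v.
Proof. by rewrite !inE fconnect_eqVf => /orP [/eqP->|//]; rewrite eqxx. Qed.

Lemma sub_trans a b u : u \in sub a -> a \in sub b -> u \in sub b.
Proof. rewrite !inE; exact: connect_trans. Qed.

Lemma sub_child c : c \in sub (par c).
Proof. by rewrite inE fconnect1. Qed.

Lemma no_cycle c v : c != r -> par c = v -> v \notin sub c.
Proof.
move=> cr pc; apply/negP; rewrite inE => /fconP [n Hn].
have Hv : forall q, iter (q * n.+1) par v = v.
  elim=> [//|q IH]; rewrite mulSn iterD.
  by rewrite IH iterS Hn pc.
have [K HK] := reach v.
have := Hv K.
have -> : K * n.+1 = (K * n.+1 - K) + K by lia.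
rewrite iterD HK iter_r => vr.
move: Hn; rewrite -vr iter_r => cr'.
by rewrite cr' eqxx in cr.
Qed.

Lemma sub_cmp u a b : u \in sub a -> u \in sub b -> (a \in sub b) || (b \in sub a).
Proof.
rewrite !inE => /fconP [n1 <-] /fconP [n2 <-].
have [le|lt] := leqP n1 n2.
  apply/orP; left; apply/fconP; exists (n2 - n1); by rewrite -iterD subnK.
apply/orP; right; apply/fconP; exists (n1 - n2); by rewrite -iterD subnK // ltnW.
Qed.

Lemma sub_disj v a b : a != r -> b != r -> par a = v -> par b = v -> a != b ->
  [disjoint sub a & sub b].
Proof.
move=> ar br pa pb ab; rewrite -setI_eq0; apply/eqP/setP => u; rewrite !inE.
apply/negP => /andP [ua ub].
have : u \in sub a by rewrite inE. have : u \in sub b by rewrite inE.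
move=> Ub Ua.
case/orP: (sub_cmp Ua Ub) => H.
- have := H; rewrite inE fconnect_eqVf (negbTE ab) pa /= => Hv.
  by have := no_cycle br pb; rewrite inE Hv.
- have := H; rewrite inE fconnect_eqVf eq_sym (negbTE ab) pb /= => Hv.
  by have := no_cycle ar pa; rewrite inE Hv.
Qed.


Lemma descend v u : u \in sub v -> u != v -> exists2 c, c \in children r par v & u \in sub c.
Proof.
rewrite inE => Huv neq.
have ex : exists n, iter n par u == v by have [n Hn] := fconP _ _ Huv; exists n; apply/eqP.
case: (ex_minnP ex) => n /eqP Hn Hmin.
case: n Hn Hmin => [|n] Hn Hmin; first by rewrite -Hn eqxx in neq.
exists (iter n par u); last by rewrite inE fconnect_iter.
rewrite inE -iterS Hn eqxx andbT.
apply/negP => /eqP Hr.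
have : iter n par u == v by rewrite Hr -Hn /= Hr par_r.
by move/Hmin; rewrite ltnn.
Qed.

Definition ccp (P : {set T}) (rho : T) :=
  rho \in P /\ forall u, u \in P -> u != rho -> (u != r) && (par u \in P).

Lemma ccp_const (P : {set T}) rho (f : T -> nat) : ccp P rho ->
  (forall x, x \in P -> x != rho -> f x = f (par x)) -> forall x, x \in P -> f x = f rho.
Proof.
move=> [rP H] Hf.
suff : forall n x, iter n par x = r -> x \in P -> f x = f rho.
  by move=> S x xP; have [n Hn] := reach x; exact: S Hn xP.
elim=> [|n IH] x.
  move=> /= -> xP; case: (eqVneq r rho) => [->//|ne].
  by have := H r xP ne; rewrite eqxx.
rewrite iterSr => Hn xP; case: (eqVneq x rho) => [->//|ne].
have /andP [_ pP] := H x xP ne.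
by rewrite Hf // (IH _ Hn pP).
Qed.

Lemma ccp_sub v : ccp (sub v) v.
Proof.
split; first exact: sub_self.
by move=> u uv ne; rewrite (sub_ne_r uv ne) (sub_par uv ne).
Qed.

Lemma ccp_subD v j : j != r -> par j = v -> ccp (sub v :\: sub j) v.
Proof.
move=> jr pj; split.
  by rewrite inE sub_self andbT; exact: no_cycle jr pj.
move=> u; rewrite !inE => /andP [uj uv] ne.
have uv' : u \in sub v by rewrite inE.
rewrite (sub_ne_r uv' ne) /=.
have := sub_par uv' ne; rewrite inE => ->; rewrite andbT.
apply/negP => H; move/negP: uj; apply.
have : u \in sub j by apply: (@sub_trans (par u)); [exact: sub_child | rewrite inE].
by rewrite inE.
Qed.



Lemma disjP' (X : finType) (A B : {set X}) : (forall x, x \in A -> x \notin B) -> [disjoint A & B].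
Proof.
move=> H; rewrite -setI_eq0; apply/eqP/setP => x; rewrite !inE.
by apply/negP => /andP [xa xb]; move: (H x xa); rewrite xb.
Qed.

Lemma cardsU_disj (X : finType) (A B : {set X}) : [disjoint A & B] -> #|A :|: B| = #|A| + #|B|.
Proof. by move=> H; rewrite cardsU (disjoint_setI0 H) cards0 subn0. Qed.

Lemma three_el (X : finType) (A : {set X}) : #|A| = 3 -> exists a b c,
  [/\ a \in A, b \in A, c \in A, [&& a != b, a != c & b != c] &
      forall x, x \in A -> [|| x == a, x == b | x == c]].
Proof.
move=> HA.
have : 0 < #|A| by rewrite HA. case/card_gt0P => a aA.
have HA1 : #|A :\ a| = 2 by move: HA; rewrite (cardsD1 a) aA; case.
have : 0 < #|A :\ a| by rewrite HA1. case/card_gt0P => b; rewrite !inE => /andP [ba bA].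
have HA2 : #|A :\ a :\ b| = 1.
  by move: HA1; rewrite (cardsD1 b) !inE ba bA; case.
move/eqP/cards1P: HA2 => [c Hc].
have : c \in A :\ a :\ b by rewrite Hc set11.
rewrite !inE => /and3P [cb ca cA].
exists a, b, c; split => //.
  by apply/and3P; split; rewrite eq_sym.
move=> x xA; case: (eqVneq x a) => //= xa; case: (eqVneq x b) => //= xb.
have : x \in A :\ a :\ b by rewrite !inE xa xb xA.
by rewrite Hc inE.
Qed.

Lemma dep_uniq v a b : depth_is r par v a -> depth_is r par v b -> a = b.
Proof.
move=> [Ha Ma] [Hb Mb]; apply/eqP; rewrite eqn_leq; apply/andP; split;
  rewrite leqNgt; apply/negP => lt.
- by move: (Ma _ lt); rewrite Hb eqxx.
- by move: (Mb _ lt); rewrite Ha eqxx.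
Qed.

Lemma dep_child c d : c != r -> depth_is r par (par c) d -> depth_is r par c d.+1.
Proof.
move=> cr [H M]; split; first by rewrite iterSr.
case=> [//|j] lt; rewrite iterSr; exact: M.
Qed.

Lemma dep_root : depth_is r par r 0.
Proof. by split. Qed.

Variable h : nat.
Hypothesis leaf_dep : forall v, is_leaf r par v -> depth_is r par v h.
Hypothesis nonleaf3 : forall v, ~~ is_leaf r par v -> #|children r par v| = 3.

Lemma leaf_sub v : is_leaf r par v -> sub v = [set v].
Proof.
move=> /eqP L; apply/setP => u; rewrite inE.
case: (eqVneq u v) => [->|ne]; first by rewrite sub_self.
apply/negP => uv; have [c] := descend uv ne.
by rewrite L inE.
Qed.

Lemma child_props v c : c \in children r par v -> c != r /\ par c = v.
Proof. by rewrite inE => /andP [-> /eqP ->]. Qed.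

Lemma child_sub v c : c \in children r par v -> sub c \subset sub v.
Proof.
move=> /child_props [_ pc]; apply/subsetP => u uc.
by apply: (sub_trans uc); rewrite -pc sub_child.
Qed.

Lemma child_lt v c : c \in children r par v -> #|sub c| < #|sub v|.
Proof.
move=> H; have [cr pc] := child_props H.
apply: proper_card; rewrite properE child_sub //=.
apply/subsetPn; exists v; first exact: sub_self.
exact: no_cycle cr pc.
Qed.

Lemma nonleaf_decomp v : ~~ is_leaf r par v -> exists a b c,
  [/\ a \in children r par v, b \in children r par v, c \in children r par v,
      [&& a != b, a != c & b != c] &
      sub v = [set v] :|: (sub a :|: (sub b :|: sub c))].
Proof.
move=> /nonleaf3 /three_el [a [b [c [aC bC cC D All]]]].
exists a, b, c; split => //.
apply/setP => u; rewrite !in_setU in_set1.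
case: (eqVneq u v) => [->|ne] /=; first by rewrite sub_self.
apply/idP/idP.
  move=> uv; have [x xC ux] := descend uv ne.
  by case/or3P: (All x xC) => /eqP E; subst x; rewrite ux ?orbT.
case/or3P => H.
- exact: (subsetP (child_sub aC)).
- exact: (subsetP (child_sub bC)).
- exact: (subsetP (child_sub cC)).
Qed.



Lemma size_dep n v d : #|sub v| <= n -> depth_is r par v d ->
  d <= h /\ #|sub v| = ctt_size (h - d).
Proof.
elim: n v d => [|n IH] v d.
  by rewrite leqn0 => /eqP/card0_eq/(_ v); rewrite sub_self.
move=> Hn Hd.
case: (boolP (is_leaf r par v)) => L.
  have := leaf_dep L => Hh; rewrite (dep_uniq Hd Hh) subnn.
  by rewrite (leaf_sub L) cards1.
have [a [b [c [aC bC cC /and3P [ab ac bc] E]]]] := nonleaf_decomp L.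
have IHc : forall x, x \in children r par v -> d.+1 <= h /\ #|sub x| = ctt_size (h - d.+1).
  move=> x xC; have [xr px] := child_props xC.
  apply: IH; last by apply: dep_child => //; rewrite px.
  by have := child_lt xC; lia.
have [dh Ea] := IHc a aC; have [_ Eb] := IHc b bC; have [_ Ec] := IHc c cC.
split; first by lia.
have [ar pa] := child_props aC; have [br pb] := child_props bC; have [cr pc] := child_props cC.
have Dbc : [disjoint sub b & sub c] by exact: (sub_disj br cr pb pc bc).
have Dabc : [disjoint sub a & sub b :|: sub c].
  apply: disjP' => x xa; rewrite in_setU; apply/norP; split.
    by rewrite (disjointFr (sub_disj ar br pa pb ab) xa).
  by rewrite (disjointFr (sub_disj ar cr pa pc ac) xa).
have Dv : [disjoint [set v] & sub a :|: (sub b :|: sub c)].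
  apply: disjP' => x; rewrite in_set1 => /eqP ->; rewrite !in_setU.
  by rewrite (negbTE (no_cycle ar pa)) (negbTE (no_cycle br pb)) (negbTE (no_cycle cr pc)).
rewrite E (cardsU_disj Dv) (cardsU_disj Dabc) (cardsU_disj Dbc) cards1 Ea Eb Ec.
have -> : h - d = (h - d.+1).+1 by rewrite -subSn // subSS.
rewrite ctt_S addnC; congr (_ + 1); by rewrite !mulSn mul0n addn0.
Qed.


Variables (m : nat) (eH : rel 'I_m) (eT : rel T) (V : {set T * 'I_m}) (SV : seq (T * 'I_m)) (p : nat).
Hypothesis eT_def : forall u v, eT u v = ((u != r) && (par u == v)) || ((v != r) && (par v == u)).
Hypothesis Hconn : forall i j, connect eH i j.
Hypothesis SVuniq : uniq SV.
Hypothesis SVmem : forall x, (x \in SV) = (x \in V).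
Hypothesis OCall : forall u, exists i, (u, i) \in V.
Hypothesis p1 : 1 <= p.
Hypothesis pm : 2 * p <= m.

Definition col k (x : T * 'I_m) : nat :=
  if x \in take k SV then 0 else if x \in drop k SV then 1 else 2.
Definition good k (e : (T * 'I_m) * (T * 'I_m)) :=
  prodTH eT eH e.1 e.2 && (col k e.1 != col k e.2).
Definition ends (s : seq ((T * 'I_m) * (T * 'I_m))) := flatten [seq [:: e.1; e.2] | e <- s].
Definition GM k s := all (good k) s && uniq (ends s).
Definition nA (P : {set T}) k := #|[set x : T * 'I_m | (x.1 \in P) && (x \notin take k SV)]|.
Definition nB (P : {set T}) k := #|[set x : T * 'I_m | (x.1 \in P) && (x \notin drop k SV)]|.
Definition bal P k := (p ^ 2 <= nA P k) && (p ^ 2 <= nB P k).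

Lemma take_drop_disj k x : x \in take k SV -> x \notin drop k SV.
Proof.
move=> xt; move: (SVuniq); rewrite -{1}(cat_take_drop k SV) cat_uniq => /and3P [_ H _].
apply/negP => xd; apply: (negP H); apply/hasP; by exists x.
Qed.

Lemma col_ne0 k x : (col k x != 0) = (x \notin take k SV).
Proof. by rewrite /col; case: (x \in take k SV) => //; case: (x \in drop k SV). Qed.

Lemma col_ne1 k x : (col k x != 1) = (x \notin drop k SV).
Proof.
rewrite /col; case: (boolP (x \in take k SV)) => xt.
  by rewrite (negbTE (take_drop_disj xt)).
by case: (x \in drop k SV).
Qed.

Lemma inV_td k x : (x \in V) = (x \in take k SV) || (x \in drop k SV).
Proof. by rewrite -SVmem -{1}(cat_take_drop k SV) mem_cat. Qed.

Lemma colV k x : x \in V -> col k x <= 1.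
Proof. by rewrite (inV_td k) /col; case: (x \in take k SV); case: (x \in drop k SV). Qed.

Lemma col_supp k x y : col k x != col k y -> supports_edge V SV k x y.
Proof.
rewrite /supports_edge !(inV_td k) /col.
by case: (x \in take k SV); case: (x \in drop k SV);
   case: (y \in take k SV); case: (y \in drop k SV).
Qed.

Lemma nA_sub (P Q : {set T}) k : P \subset Q -> nA P k <= nA Q k.
Proof.
move=> /subsetP PQ; apply: subset_leq_card; apply/subsetP => x; rewrite !inE.
by case/andP => /PQ -> ->.
Qed.

Lemma nB_sub (P Q : {set T}) k : P \subset Q -> nB P k <= nB Q k.
Proof.
move=> /subsetP PQ; apply: subset_leq_card; apply/subsetP => x; rewrite !inE.
by case/andP => /PQ -> ->.
Qed.

Lemma nA_mono (P : {set T}) k1 k2 : k1 <= k2 -> nA P k2 <= nA P k1.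
Proof.
move=> le; apply: subset_leq_card; apply/subsetP => x; rewrite !inE.
case/andP => -> /=; apply: contra => H.
by rewrite -(take_takel _ le) in H; apply: mem_take H.
Qed.

Lemma nB_mono (P : {set T}) k1 k2 : k1 <= k2 -> nB P k1 <= nB P k2.
Proof.
move=> le; apply: subset_leq_card; apply/subsetP => x; rewrite !inE.
case/andP => -> /=; apply: contra => H.
rewrite -(subnK le) -drop_drop in H; apply: mem_drop H.
Qed.

Lemma card_union_le (X : finType) (A B : {set X}) : #|A :|: B| <= #|A| + #|B|.
Proof. by rewrite cardsU leq_subr. Qed.

Lemma nB_step (P : {set T}) k : nB P k.+1 <= (nB P k).+1.
Proof.
rewrite /nB; case E: (drop k SV) => [|y l].
  have E' : drop k.+1 SV = [::] by rewrite -addn1 addnC -drop_drop E.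
  rewrite E'; apply: leqW; apply: subset_leq_card; apply/subsetP => x; rewrite !inE.
  by case/andP => ->.
have E' : drop k.+1 SV = l by rewrite -addn1 addnC -drop_drop E /= drop0.
rewrite E' -addn1 -(cards1 y); apply: (leq_trans _ (card_union_le _ _)).
apply: subset_leq_card; apply/subsetP => x; rewrite !inE.
case/andP => -> xl /=; case: (eqVneq x y) => [->|ne]; first by rewrite orbT.
by rewrite orbF /=.
Qed.

Lemma cardP (P : {set T}) : #|[set x : T * 'I_m | x.1 \in P]| = #|P| * m.
Proof.
have -> : [set x : T * 'I_m | x.1 \in P] = setX P [set: 'I_m].
  by apply/setP => [[u i]]; rewrite !inE andbT.
by rewrite cardsX cardsT card_ord.
Qed.

Lemma nAB_sum (P : {set T}) k : #|P| * m <= nA P k + nB P k.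
Proof.
rewrite -cardP /nA /nB; apply: (leq_trans _ (card_union_le _ _)).
apply: subset_leq_card; apply/subsetP => x; rewrite !inE => -> /=.
case: (boolP (x \in take k SV)) => //= xt.
by rewrite (take_drop_disj xt).
Qed.

Lemma nB_end (P : {set T}) : nB P (size SV) = #|P| * m.
Proof.
rewrite -cardP /nB drop_size; apply: eq_card => x; by rewrite !inE andbT.
Qed.

Lemma nA_0 (P : {set T}) : nA P 0 = #|P| * m.
Proof.
rewrite -cardP /nA take0; apply: eq_card => x; by rewrite !inE andbT.
Qed.

Lemma bal_exists (P : {set T}) : p <= #|P| -> exists k, bal P k.
Proof.
move=> pP.
have big : 2 * p ^ 2 <= #|P| * m.
  have := leq_mul pP pm; rewrite expnS expn1; lia.
have ex : exists k, p ^ 2 <= nB P k.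
  by exists (size SV); rewrite nB_end; lia.
case: (ex_minnP ex) => k0 H0 Hmin.
exists k0; rewrite /bal H0 andbT.
case: k0 H0 Hmin => [|k] H0 Hmin; first by rewrite nA_0; lia.
have lt : nB P k < p ^ 2.
  by rewrite ltnNge; apply/negP => /Hmin; rewrite ltnn.
have := nB_step P k; have := nAB_sum P k.+1; lia.
Qed.

Lemma connect_change (X : finType) (e : rel X) (f : X -> nat) x y :
  connect e x y -> f x != f y -> exists a b, e a b && (f a != f b).
Proof.
move=> /connectP [q pq ->]; elim: q x pq => [|z q IH] x /=; first by rewrite eqxx.
case/andP => exz pq ne.
case: (eqVneq (f x) (f z)) => [E|ne'].
  by apply: IH pq _; rewrite -E.
by exists x, z; rewrite exz ne'.
Qed.

Lemma build (K E : eqType) (key : E -> K) (Q : E -> Prop) (l : seq K) :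
  (forall u, u \in l -> exists e, Q e /\ key e = u) ->
  exists s : seq E, map key s = l /\ (forall e, e \in s -> Q e).
Proof.
elim: l => [|u l IH] H; first by exists [::].
have [e [Qe ke]] := H u (mem_head _ _).
have [s [Hs Qs]] : exists s : seq E, map key s = l /\ (forall e, e \in s -> Q e).
  by apply: IH => v vl; apply: H; rewrite in_cons vl orbT.
exists (e :: s); split; first by rewrite /= ke Hs.
by move=> e'; rewrite in_cons => /orP [/eqP ->|/Qs].
Qed.

Lemma mem_endsP x s : reflect (exists2 e, e \in s & (x == e.1) || (x == e.2)) (x \in ends s).
Proof.
by apply: (iffP flatten_mapP) => [[e es H]|[e es H]]; exists e => //; move: H; rewrite !inE.
Qed.

Lemma ends_cons e s : ends (e :: s) = e.1 :: e.2 :: ends s.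
Proof. by []. Qed.

Lemma ends_cat s1 s2 : ends (s1 ++ s2) = ends s1 ++ ends s2.
Proof. by rewrite /ends map_cat flatten_cat. Qed.

Lemma ends_uniq_key (K : eqType) (pi : T * 'I_m -> K) s :
  (forall e, e \in s -> (e.1 != e.2) && (pi e.2 == pi e.1)) ->
  uniq (map (fun e => pi e.1) s) -> uniq (ends s).
Proof.
elim: s => [//|e s IH] H; rewrite ends_cons => /andP [ns us].
have /andP [ne /eqP pe] := H e (mem_head _ _).
have Hs : forall e', e' \in s -> (e'.1 != e'.2) && (pi e'.2 == pi e'.1).
  by move=> e' e's; apply: H; rewrite in_cons e's orbT.
have notin : forall x, pi x = pi e.1 -> x \notin ends s.
  move=> x px; apply/negP => /mem_endsP [e' e's xe'].
  have /andP [_ /eqP pe'] := Hs e' e's.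
  move/negP: ns; apply; apply/mapP; exists e' => //.
  by case/orP: xe' => /eqP xe; rewrite -px xe ?pe'.
rewrite /= in_cons negb_or ne !notin // IH //.
Qed.

Lemma good_neq k e : good k e -> e.1 != e.2.
Proof. by case/andP => _; apply: contra => /eqP ->. Qed.

Lemma ccp_change (P : {set T}) rho (f : T -> nat) u w : ccp P rho -> u \in P -> w \in P ->
  f u != f w -> exists x, [&& x \in P, x != rho & f x != f (par x)].
Proof.
move=> cP uP wP ne.
case: (boolP [exists x, [&& x \in P, x != rho & f x != f (par x)]]) => [/existsP//|/existsPn H].
have C := ccp_const cP (f := f).
have : f u = f w.
  rewrite !C // => x xP xr; move: (H x); rewrite xP xr /= => /negPn /eqP //.
by move=> E; rewrite E eqxx in ne.
Qed.

Lemma KL (P : {set T}) rho k : ccp P rho -> p <= #|P| -> bal P k ->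
  exists s, [/\ GM k s, (forall x, x \in ends s -> x.1 \in P) & p <= size s].
Proof.
move=> cP pP bP.
set NR := [set u in P | [exists i, exists j, col k (u, i) != col k (u, j)]].
set NC := [set i : 'I_m | [exists u, exists w, [&& u \in P, w \in P & col k (u, i) != col k (w, i)]]].
case: (leqP p #|NR|) => HR.
  have [s [Hs Qs]] : exists s : seq ((T * 'I_m) * (T * 'I_m)),
      map (fun e => e.1.1) s = enum NR /\ (forall e, e \in s -> [&& good k e, e.2.1 == e.1.1 & e.1.1 \in P]).
    apply: build => u; rewrite mem_enum inE => /andP [uP /existsP [i /existsP [j ne]]].
    have [a [b /andP [ab ne']]] := connect_change (f := fun i => col k (u, i)) (Hconn i j) ne.
    exists ((u, a), (u, b)); split => //=.
    by rewrite /good /prodTH /= eqxx ab ne' uP.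
  exists s; split.
  - apply/andP; split; first by apply/allP => e /Qs /and3P [].
    apply: (ends_uniq_key (pi := fst)); last by rewrite Hs enum_uniq.
    by move=> e /Qs /and3P [g -> _]; rewrite (good_neq g).
  - move=> x /mem_endsP [e /Qs /and3P [_ /eqP E eP] /orP [] /eqP ->] //.
    by rewrite E.
  - by rewrite -(size_map (fun e : (T * 'I_m) * (T * 'I_m) => e.1.1)) Hs -cardE.
case: (leqP p #|NC|) => HC.
  have [s [Hs Qs]] : exists s : seq ((T * 'I_m) * (T * 'I_m)),
      map (fun e => e.1.2) s = enum NC /\ (forall e, e \in s -> [&& good k e, e.2.2 == e.1.2, e.1.1 \in P & e.2.1 \in P]).
    apply: build => i; rewrite mem_enum inE => /existsP [u /existsP [w /and3P [uP wP ne]]].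
    have [x /and3P [xP xr ne']] := ccp_change (f := fun u => col k (u, i)) cP uP wP ne.
    have [_ H] := cP; have /andP [xr' pxP] := H x xP xr.
    exists ((x, i), (par x, i)); split => //=.
    by rewrite /good /prodTH /= eqxx eT_def xr' eqxx ne' xP pxP !orbT.
  exists s; split.
  - apply/andP; split; first by apply/allP => e /Qs /and4P [].
    apply: (ends_uniq_key (pi := snd)); last by rewrite Hs enum_uniq.
    by move=> e /Qs /and4P [g -> _]; rewrite (good_neq g).
  - by move=> x /mem_endsP [e /Qs /and4P [_ _ e1 e2] /orP [] /eqP ->].
  - by rewrite -(size_map (fun e : (T * 'I_m) * (T * 'I_m) => e.1.2)) Hs -cardE.
exfalso.
have [u0 u0P u0R] : exists2 u0, u0 \in P & u0 \notin NR.
  apply/subsetPn; apply/negP => /subset_leq_card; lia.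
have [i0 _ i0C] : exists2 i0, i0 \in [set: 'I_m] & i0 \notin NC.
  apply/subsetPn; apply/negP => /subset_leq_card; rewrite cardsT card_ord => H.
  have := leq_ltn_trans H HC; lia.
have Rm : forall u, u \in P -> u \notin NR -> forall i j, col k (u, i) = col k (u, j).
  move=> u uP; rewrite inE uP /= => /existsPn H i j.
  by move: (H i) => /existsPn /(_ j) /negPn /eqP.
have Cm : forall i, i \notin NC -> forall u w, u \in P -> w \in P -> col k (u, i) = col k (w, i).
  move=> i; rewrite inE => /existsPn H u w uP wP.
  by move: (H u) => /existsPn /(_ w); rewrite uP wP /= => /negPn /eqP.
set X := col k (u0, i0).
have sub1 : [set x : T * 'I_m | (x.1 \in P) && (col k x != X)] \subset setX NR NC.
  apply/subsetP => [[u i]]; rewrite inE /= => /andP [uP ne]; rewrite in_setX /=.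
  case: (boolP (u \in NR)) => [_|uR].
    case: (boolP (i \in NC)) => [//|iC].
    by move: ne; rewrite (Cm i iC u u0) // /X (Rm u0 u0P u0R i i0) eqxx.
  by move: ne; rewrite (Rm u uP uR i i0) /X (Cm i0 i0C u u0) // eqxx.
have small : #|[set x : T * 'I_m | (x.1 \in P) && (col k x != X)]| < p ^ 2.
  apply: (leq_ltn_trans (subset_leq_card sub1)); rewrite cardsX.
  have := leq_mul HR HC; rewrite expnS expn1; lia.
have [j0 j0V] := OCall u0.
have X1 : X <= 1 by rewrite /X (Rm u0 u0P u0R i0 j0); exact: colV.
case/andP: bP => bA bB.
have [EX|EX] : X = 0 \/ X = 1 by lia.
all: rewrite EX in small.
- move: bA; rewrite /nA; have -> : [set x : T * 'I_m | (x.1 \in P) && (x \notin take k SV)] =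
     [set x : T * 'I_m | (x.1 \in P) && (col k x != 0)] by apply/setP => x; rewrite !inE col_ne0.
  lia.
- move: bB; rewrite /nB; have -> : [set x : T * 'I_m | (x.1 \in P) && (x \notin drop k SV)] =
     [set x : T * 'I_m | (x.1 \in P) && (col k x != 1)] by apply/setP => x; rewrite !inE col_ne1.
  lia.
Qed.

Lemma combine v a j b ka kj kb sj :
  a \in children r par v -> j \in children r par v -> b \in children r par v ->
  a != j -> b != j ->
  bal (sub a) ka -> bal (sub b) kb -> ka <= kj -> kj <= kb -> bal (sub j) kj ->
  GM kj sj -> (forall x, x \in ends sj -> x.1 \in sub j) -> p <= #|sub a| ->
  exists k s, [/\ bal (sub v) k, GM k s, (forall x, x \in ends s -> x.1 \in sub v)
                & size sj + p <= size s].
Proof.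
move=> aC jC bC aj bj ba bb le1 le2 bj' Gj Ej pa.
have [ar pa'] := child_props aC; have [jr pj] := child_props jC; have [br pb] := child_props bC.
set P' := sub v :\: sub j.
have cP : ccp P' v by exact: ccp_subD.
have sP : forall x, x \in children r par v -> x != j -> sub x \subset P'.
  move=> x xC xj; have [xr px] := child_props xC.
  apply/subsetP => u ux; rewrite in_setD (subsetP (child_sub xC) _ ux) andbT.
  by rewrite (disjointFr (sub_disj xr jr px pj xj) ux).
have bP : bal P' kj.
  case/andP: ba => _ ba2; case/andP: bb => bb1 _.
  apply/andP; split.
    apply: (leq_trans bb1); apply: (leq_trans (nA_mono _ le2)); exact: nA_sub (sP _ bC bj).
  apply: (leq_trans ba2); apply: (leq_trans (nB_mono _ le1)); exact: nB_sub (sP _ aC aj).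
have pP : p <= #|P'| by apply: (leq_trans pa); exact: subset_leq_card (sP _ aC aj).
have [s' [G' E' S']] := KL cP pP bP.
exists kj, (sj ++ s'); split.
- case/andP: bj' => b1 b2; apply/andP; split.
    by apply: (leq_trans b1); exact: nA_sub (child_sub jC).
  by apply: (leq_trans b2); exact: nB_sub (child_sub jC).
- case/andP: Gj => g1 u1; case/andP: G' => g2 u2.
  rewrite /GM all_cat g1 g2 ends_cat cat_uniq u1 u2 /= andbT.
  apply/hasPn => x xs'; apply/negP => xsj.
  by have := E' x xs'; rewrite in_setD (Ej x xsj).
- move=> x; rewrite ends_cat mem_cat => /orP [/Ej|/E'].
    exact: (subsetP (child_sub jC)).
  by rewrite in_setD => /andP [].
- by rewrite size_cat leq_add2l.
Qed.

Definition IHres (x : T) (Y : nat) :=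
  exists k s, [/\ bal (sub x) k, GM k s, (forall y, y \in ends s -> y.1 \in sub x) & Y <= size s].

Lemma combine3 v a b c Y :
  a \in children r par v -> b \in children r par v -> c \in children r par v ->
  [&& a != b, a != c & b != c] ->
  p <= #|sub a| -> p <= #|sub b| -> p <= #|sub c| ->
  IHres a Y -> IHres b Y -> IHres c Y -> IHres v (Y + p).
Proof.
move=> aC bC cC /and3P [ab ac bc] pa pb pc [ka [sa [ba Ga Ea Sa]]]
  [kb [sb [bb Gb Eb Sb]]] [kc [sc [bc' Gc Ec Sc]]].
have ba' := ba; have bb' := bb.
have F : forall x y z kx ky kz sy, x \in children r par v -> y \in children r par v ->
   z \in children r par v -> x != y -> z != y -> bal (sub x) kx -> bal (sub z) kz ->
   kx <= ky -> ky <= kz -> bal (sub y) ky -> GM ky sy ->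
   (forall w, w \in ends sy -> w.1 \in sub y) -> p <= #|sub x| -> Y <= size sy -> IHres v (Y + p).
  move=> x y z kx ky kz sy xC yC zC xy zy bx bz l1 l2 by' Gy Ey px Sy.
  have [k [s [H1 H2 H3 H4]]] := combine xC yC zC xy zy bx bz l1 l2 by' Gy Ey px.
  exists k, s; split => //; apply: leq_trans H4; by rewrite leq_add2r.
have ba_ : b != a by rewrite eq_sym. have ca : c != a by rewrite eq_sym.
have cb : c != b by rewrite eq_sym.
case: (leqP ka kb) => l_ab; case: (leqP kb kc) => l_bc; case: (leqP ka kc) => l_ac.
- by apply: (F a b c ka kb kc sb).
- by apply: (F a b c ka kb kc sb).
- by apply: (F a c b ka kc kb sc) => //; apply: ltnW.
- by apply: (F c a b kc ka kb sa) => //; apply: ltnW.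
- by apply: (F b a c kb ka kc sa) => //; apply: ltnW.
- by apply: (F b c a kb kc ka sc) => //; apply: ltnW.
- by apply: (F c b a kc kb ka sb) => //; apply: ltnW.
- by apply: (F c b a kc kb ka sb) => //; apply: ltnW.
Qed.

Lemma main n v d : #|sub v| <= n -> depth_is r par v d -> p <= #|sub v| ->
  IHres v (p * ((h - d) - tr p)).
Proof.
elim: n v d => [|n IH] v d.
  by rewrite leqn0 => /eqP/card0_eq/(_ v); rewrite sub_self.
move=> Hn Hd pv.
have [dh Sv] := size_dep (leqnn _) Hd.
case: (boolP (is_leaf r par v)) => L.
  have := leaf_dep L => Hh; rewrite (dep_uniq Hd Hh) subnn sub0n muln0.
  have [k bk] := bal_exists pv.
  by exists k, [::]; split.
have [a [b [c [aC bC cC D E]]]] := nonleaf_decomp L.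
have Sc : forall x, x \in children r par v -> d.+1 <= h /\ #|sub x| = ctt_size (h - d.+1).
  move=> x xC; have [xr px] := child_props xC.
  apply: (size_dep (leqnn _)); by apply: dep_child => //; rewrite px.
have [dh1 _] := Sc a aC.
case: (leqP p (ctt_size (h - d.+1))) => hp.
  have IHx : forall x, x \in children r par v -> IHres x (p * ((h - d.+1) - tr p)).
    move=> x xC; have [xr px] := child_props xC.
    apply: IH.
    - by rewrite -ltnS; apply: leq_trans (child_lt xC) Hn.
    - by apply: dep_child => //; rewrite px.
    - by have [_ ->] := Sc x xC.
  have pc : forall x, x \in children r par v -> p <= #|sub x|.
    by move=> x xC; have [_ ->] := Sc x xC.
  have := combine3 aC bC cC D (pc a aC) (pc b bC) (pc c cC) (IHx a aC) (IHx b bC) (IHx c cC).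
  move=> [k [s [H1 H2 H3 H4]]]; exists k, s; split => //.
  apply: leq_trans H4; rewrite addnC -mulnS leq_mul2l; apply/orP; right.
  have -> : h - d = (h - d.+1).+1 by rewrite -subSn // subSS.
  exact: subS_le.
have ht : h - d.+1 <= tr p by apply: tr_ge; exact: ltnW.
have [k bk] := bal_exists pv.
have [s [G Es Ss]] := KL (ccp_sub v) pv bk.
exists k, s; split => //.
apply: leq_trans Ss; rewrite -[X in _ <= X]muln1 leq_mul2l; apply/orP; right.
have -> : h - d = (h - d.+1).+1 by rewrite -subSn // subSS.
exact: subn_leq1.
Qed.

Lemma ends_uniq_s s : uniq (ends s) -> uniq s.
Proof.
elim: s => [//|e s IH]; rewrite ends_cons /= => /and3P [n1 n2 u].
rewrite IH // andbT; apply/negP => es.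
move: n2; rewrite (_ : e.2 \in ends s) //; apply/mem_endsP; exists e => //.
by rewrite eqxx orbT.
Qed.

Lemma head_disj a s e : a.1 \notin ends s -> a.2 \notin ends s -> e \in s ->
  [disjoint [set a.1; a.2] & [set e.1; e.2]].
Proof.
move=> n1 n2 es; apply: disjP' => x; rewrite !inE => /orP [] /eqP ->.
- apply/negP => /orP [] /eqP E; move/negP: n1; apply; apply/mem_endsP; exists e => //; by rewrite E eqxx ?orbT.
- apply/negP => /orP [] /eqP E; move/negP: n2; apply; apply/mem_endsP; exists e => //; by rewrite E eqxx ?orbT.
Qed.

Lemma ends_pair_disj s e e' : uniq (ends s) -> e \in s -> e' \in s -> e != e' ->
  [disjoint [set e.1; e.2] & [set e'.1; e'.2]].
Proof.
elim: s => [//|a s IH]; rewrite ends_cons /= => /and3P [n1 n2 u].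
rewrite in_cons negb_or in n1; case/andP: n1 => _ n1.
rewrite !in_cons => /orP [/eqP ->|es] /orP [/eqP ->|e's] ne.
- by rewrite eqxx in ne.
- exact: (head_disj n1 n2 e's).
- by rewrite disjoint_sym; exact: (head_disj n1 n2 es).
- exact: IH.
Qed.

Lemma pair_eq (X : finType) (u v a b : X) : [set u; v] = [set a; b] -> u != v ->
  (u = a /\ v = b) \/ (u = b /\ v = a).
Proof.
move=> E ne.
have mu : u \in [set a; b] by rewrite -E !inE eqxx.
have mv : v \in [set a; b] by rewrite -E !inE eqxx orbT.
have ma : a \in [set u; v] by rewrite E !inE eqxx.
have mb : b \in [set u; v] by rewrite E !inE eqxx orbT.
move: mu mv; rewrite !inE => /orP [] /eqP eu /orP [] /eqP ev.
- by rewrite eu ev eqxx in ne.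
- by left.
- by right.
- by rewrite eu ev eqxx in ne.
Qed.

Hypothesis pT : p <= #|T|.

Lemma compl_card (l : seq (T * 'I_m)) : uniq l ->
  #|[set x : T * 'I_m | x \notin l]| = #|{: T * 'I_m}| - size l.
Proof.
move=> ul.
have := cardsC [set x : T * 'I_m | x \in l].
have -> : ~: [set x : T * 'I_m | x \in l] = [set x : T * 'I_m | x \notin l].
  by apply/setP => x; rewrite !inE.
rewrite cardsE (card_uniqP ul) => <-.
by rewrite addKn.
Qed.


Lemma final_sec : exists (M : {set {set T * 'I_m}}) (k : nat),
    [/\ is_matching (prodTH eT eH) M,
        supports_matching V SV k M,
        p * (tr #|T| - tr p) <= #|M|,
        p ^ 2 <= #|{: T * 'I_m}| - size (take k SV)
      & p ^ 2 <= #|{: T * 'I_m}| - size (drop k SV)].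
Proof.
have subT : sub r = [set: T] by apply/setP => u; rewrite in_setT sub_root.
have Hr : p <= #|sub r| by rewrite subT cardsT.
have [_ Sr] := size_dep (leqnn _) dep_root.
have [k [s [bk G Es Ss]]] := main (leqnn _) dep_root Hr.
case/andP: G => gs us.
have uS := ends_uniq_s us.
set f := fun e : (T * 'I_m) * (T * 'I_m) => [set e.1; e.2].
have inj : {in s &, injective f}.
  move=> e e' es e's E; apply/eqP; apply/negPn/negP => ne.
  have D := ends_pair_disj us es e's ne.
  by move: (disjointFr D (setU11 e.1 [set e.2])); rewrite /f in E; rewrite -E setU11.
exists (f @: s), k; split.
- split.
    move=> A /imsetP [e es ->]; exists e.1, e.2.
    have /andP [g ne] := allP gs e es.
    by split => //; rewrite (good_neq (allP gs e es)).
  move=> A B /imsetP [e es ->] /imsetP [e' e's ->] ne.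
  apply: (ends_pair_disj us es e's); apply/eqP => E; move/eqP: ne; apply; by rewrite E.
- move=> u v /imsetP [e es E] ne.
  have /andP [_ ce] := allP gs e es.
  apply: col_supp; case: (pair_eq E ne) => [[-> ->]|[-> ->]] //.
  by rewrite eq_sym.
- rewrite (card_in_imset inj) (card_uniqP uS).
  apply: leq_trans Ss; rewrite leq_mul2l; apply/orP; right.
  apply: leq_sub2r; rewrite -cardsT -subT Sr subn0; exact: tr_ctt.
- case/andP: bk => b1 _; apply: (leq_trans b1); rewrite /nA -(compl_card (take_uniq k SVuniq)).
  by apply: subset_leq_card; apply/subsetP => x; rewrite !inE => /andP [].
- case/andP: bk => _ b2; apply: (leq_trans b2); rewrite /nB -(compl_card (drop_uniq k SVuniq)).
  by apply: subset_leq_card; apply/subsetP => x; rewrite !inE => /andP [].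
Qed.

End Tree.

Theorem lemma3 (p : nat) (m : nat) (eH : rel 'I_m) (T : finType) (eT : rel T)
    (h : nat) (V : {set T * 'I_m}) (SV : seq (T * 'I_m)) :
  1 <= p ->
  connected_graph eH -> 2 * p <= m ->
  complete_ternary_tree eT h -> p <= #|T| ->
  OC V = [set: T] ->
  ordering_of V SV ->
  exists (M : {set {set T * 'I_m}}) (k : nat),
    [/\ is_matching (prodTH eT eH) M,
        supports_matching V SV k M,
        p * (tr #|T| - tr p) <= #|M|,
        p ^ 2 <= #|{: T * 'I_m}| - size (take k SV)
      & p ^ 2 <= #|{: T * 'I_m}| - size (drop k SV)].
Proof.
move=> p1 [_ Hconn] pm [r [par [[par_r [reach edef]] [leafd nonl]]]] pT OCV [SVu SVm].
have OCall : forall u, exists i, (u, i) \in V.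
  move=> u; have : u \in OC V by rewrite OCV inE.
  by rewrite inE => /existsP.
exact: (final_sec par_r reach leafd nonl edef Hconn SVu SVm OCall p1 pm pT).
Qed.
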